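(* Let $q$ be a prime power, $m$ a positive integer, and let $g_{11}(x),g_{12}(x),f_{11}(x),f_{12}(x)\in\mathbb{F}_q[x]$ be such that $g_{11}(x)\mid x^m-1$ and $f_{11}(x)\mid x^m-1$. Suppose $\gcd(g_{11}(x),g_{12}(x))=1$, $\gcd(f_{11}(x),f_{12}(x))=1$ and $\gcd(f_{11}(x),g_{11}(x))=1$. Then the following are equivalent: (1) $\gcd\left(\dfrac{x^m-1}{f_{11}(x)},\dfrac{x^m-1}{g_{11}(x)},\,g_{11}(x)f_{12}(x)-g_{12}(x)f_{11}(x)\right)=1$; (2) $\gcd\big(x^m-1,\,g_{11}(x)f_{12}(x)-g_{12}(x)f_{11}(x)\big)=1$. *)

(* Defs.v *)
From mathcomp Require Import all_boot all_algebra all_field.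
Set Implicit Arguments.
Unset Strict Implicit.
Unset Printing Implicit Defensive.

(* Main.v *)
Require Import Defs.
From mathcomp Require Import all_boot all_algebra all_field.
Import GRing.Theory.
Local Open Scope ring_scope.

Theorem lemma4p2 (F : finFieldType) (m : nat) (g11 g12 f11 f12 : {poly F}) :
  (0 < m)%N ->
  g11 %| 'X^m - 1 -> f11 %| 'X^m - 1 ->
  coprimep g11 g12 -> coprimep f11 f12 -> coprimep f11 g11 ->
  (coprimep (gcdp (('X^m - 1) %/ f11) (('X^m - 1) %/ g11))
            (g11 * f12 - g12 * f11)
   <-> coprimep ('X^m - 1) (g11 * f12 - g12 * f11)).
Proof.
move=> m0 dg df cg cf cfg.
have P0 : 'X^m - 1 != 0 :> {poly F}.
  by rewrite -size_poly_eq0 size_XnsubC.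
set P := 'X^m - 1 in P0 dg df *; set D := g11 * f12 - g12 * f11.
have f0 : f11 != 0 by apply: contraNneq P0 => e; move: df; rewrite e dvd0p.
have g0 : g11 != 0 by apply: contraNneq P0 => e; move: dg; rewrite e dvd0p.
split; last first.
  move=> cPD; rewrite coprimep_sym; apply: (coprimep_dvdl (q := P)); last by rewrite coprimep_sym.
  by apply: dvdp_trans (dvdp_gcdl _ _) _; apply: divp_dvd.
move=> cGD.
have dfg : f11 * g11 %| P by rewrite Gauss_dvdp // df dg.
set C := P %/ (f11 * g11).
have PE : P = C * (f11 * g11) by rewrite divpK.
have cCD : coprimep C D.
  rewrite coprimep_sym; apply: coprimep_dvdl; last by rewrite coprimep_sym; exact: cGD.
  rewrite dvdp_gcd; apply/andP; split.
    by rewrite PE [f11 * g11]mulrC mulrA mulpK // dvdp_mulr.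
  by rewrite PE mulrA mulpK // dvdp_mulr.
have cfD : coprimep f11 D.
  by rewrite /D addrC -mulNr coprimep_addl_mul coprimepMr cf cfg.
have cgD : coprimep g11 D.
  rewrite /D -mulNr [g11 * f12]mulrC coprimep_addl_mul coprimepMr.
  rewrite -scaleN1r (eqp_coprimepr _ (eqp_scale _ _)) ?oppr_eq0 ?oner_eq0 //.
  by rewrite cg coprimep_sym cfg.
by rewrite PE !coprimepMl cCD cfD cgD.
Qed.
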